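(* For any configuration $G$, if $G$ is feasible then there exist a patient DRIP $D_{pat}$ and a decision function $f_{pat}$ for $D_{pat}$ such that $(D_{pat},f_{pat})$ is a dedicated leader election algorithm for $G$.
   Context: Model. A configuration is a finite simple undirected connected graph $G$ in which each node $v$ is tagged with a non-negative integer $t_v$ (its wakeup tag); smallest tag $0$, span $\sigma$ = largest tag. Nodes are anonymous and communicate in synchronous global rounds. A node $v$ wakes up in the first global round $r\le t_v$ in which it receives a message, if any, and otherwise in global round $t_v$. Its local clock is $0$ in its wakeup round; it acts from local round $1$ on. In each round a node transmits a message to all neighbours, listens, or terminates. A listening node receives $M$ if exactly one neighbour transmits ($M$), hears collision noise (distinct from silence and messages) if at least two neighbours transmit, and silence otherwise; a transmitting node hears nothing. History $\mathcal H_v[i]$ of $v$ in local round $i\ge0$: $(\emptyset)$ if $v$ transmits or hears silence (or $i=0$ and spontaneous wakeup), $(M)$ if $v$ receives $M$ (or $i=0$ and woken by $M$), $( * )$ on collision. A DRIP is a function $D$ from finite history vectors to $\{\mathit{listen},\mathit{transmit}(M),\mathit{terminate}\}$; node $v$ in local round $i\ge1$ performs $D(\mathcal H_v[0\ldots i-1])$; every node must eventually terminate permanently, $done_v$ being the first local round it terminates. A decision function $f$ for $D$ maps $\mathcal H_v[0\ldots done_v]$ to $\{0,1\}$. $(D,f)$ is a dedicated leader election algorithm for $G$ if, when all nodes of $G$ execute $D$, $f$ outputs $1$ at exactly one node; $G$ is feasible if such a pair exists. A DRIP is patient (for $G$) if, when executed by all nodes of $G$, no node transmits in any of the global rounds $0,\ldots,\sigma$.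 *)

(* Defs.v *)
From mathcomp Require Import all_boot.
Set Implicit Arguments. Unset Strict Implicit. Unset Printing Implicit Defensive.

(* History entries: silence/transmitting ((empty)), a received message (M), collision ( * ). *)
Inductive entry : Type := ESil | EMsg of nat | ECol.
Inductive action : Type := Listen | Transmit of nat | Terminate.

Definition drip := seq entry -> action.
(* A decision function: from final histories H[0..done_v] to {0,1} (false=0, true=1). *)
Definition decision := seq entry -> bool.

Section Execution.
Variables (V : finType) (adj : rel V) (t : V -> nat) (D : drip).

(* Node state before a global round: None = asleep;
   Some (h, b) = awake with history h (h = H[0 .. size h - 1]), b = terminated. *)
Definition nstate := V -> option (seq entry * bool).

Definition tx (s : nstate) (u : V) : option nat :=
  match s u with
  | Some (h, false) => if D h is Transmit m then Some m else None
  | _ => None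
  end.

Definition reception (s : nstate) (v : V) : entry :=
  match pmap (tx s) (filter (adj v) (enum V)) with
  | [::] => ESil
  | [:: m] => EMsg m
  | _ => ECol
  end.

Definition step (s : nstate) (r : nat) : nstate := fun v =>
  match s v with
  | None =>
      if reception s v is EMsg m then Some ([:: EMsg m], false)
      else if t v == r then Some ([:: ESil], false) else None
  | Some (h, true) => Some (h, true)
  | Some (h, false) =>
      match D h with
      | Transmit _ => Some (rcons h ESil, false)
      | Listen => Some (rcons h (reception s v), false)
      | Terminate => Some (rcons h (reception s v), true)
      end
  end.

(* exec r = state of all nodes before global round r *)
Fixpoint exec (r : nat) : nstate :=
  match r with
  | 0 => fun _ => None
  | r'.+1 => step (exec r') r'
  end.

End Execution.

Definition configuration (V : finType) (adj : rel V) (t : V -> nat) : Prop :=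
  [/\ symmetric adj, irreflexive adj, (forall x y : V, connect adj x y)
    & exists v, t v = 0].

Definition span (V : finType) (t : V -> nat) : nat := \max_(v : V) t v.

Definition dedicated_LE (V : finType) (adj : rel V) (t : V -> nat)
    (D : drip) (f : decision) : Prop :=
  exists R : nat,
    (forall v : V, exists h, exec adj t D R v = Some (h, true)) /\
    #|[pred v : V | if exec adj t D R v is Some (h, true) then f h else false]| = 1.

Definition feasible (V : finType) (adj : rel V) (t : V -> nat) : Prop :=
  exists (D : drip) (f : decision), dedicated_LE adj t D f.

Definition patient (V : finType) (adj : rel V) (t : V -> nat) (D : drip) : Prop :=
  forall r : nat, r <= span t -> forall v : V, tx D (exec adj t D r) v = None.

(* Main.v *)
Require Import Defs.
From mathcomp Require Import all_boot.
From mathcomp Require Import zify.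

Set Implicit Arguments. Unset Strict Implicit. Unset Printing Implicit Defensive.

Definition isMsg (e : entry) : bool := if e is EMsg _ then true else false.
Definition startidx (S : nat) (h : seq entry) := minn (find isMsg (behead h)).+1 S.
Definition started S h := startidx S h < size h.
Definition virt S h :=
  (if nth ESil h (startidx S h) is EMsg m then EMsg m else ESil) :: drop (startidx S h).+1 h.
Definition Dpat S (D : drip) : drip := fun h => if started S h then D (virt S h) else Listen.
Definition fpat S (f : decision) : decision := fun h => f (virt S h).

Lemma startidx_rcons S h e : started S h -> startidx S (rcons h e) = startidx S h.
Proof.
rewrite /started /startidx; case: h => [|x h] //=.
rewrite -cats1 find_cat; case: ifP => // /negbT hn.
have -> : find isMsg h = size h by apply/eqP; rewrite eqn_leq find_size leqNgt -has_find.
move=> H; lia.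
Qed.

Lemma started_rcons S h e : started S h -> started S (rcons h e).
Proof. move=> H; rewrite /started startidx_rcons // size_rcons; move: H; rewrite /started; lia. Qed.

Lemma virt_rcons S h e : started S h -> virt S (rcons h e) = rcons (virt S h) e.
Proof.
move=> H; rewrite /virt startidx_rcons // nth_rcons.
move: (H); rewrite /started => H'; rewrite H' /=.
rewrite -!cats1 drop_cat.
case: (ltnP (startidx S h).+1 (size h)) => Hl //.
have -> : (startidx S h).+1 = size h by lia.
by rewrite drop_size subnn.
Qed.

Lemma startidx_nst S h e : ~~ started S h -> 0 < size h -> size h <= S ->
  startidx S (rcons h e) = if isMsg e then size h else minn (size h).+1 S.
Proof.
rewrite /started /startidx; case: h => [|x h] //= H _ Hs.
have hf : find isMsg h = size h.
  apply/eqP; rewrite eqn_leq find_size /=. move: H; rewrite -leqNgt; lia.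
have hn : has isMsg h = false by rewrite has_find hf ltnn.
rewrite -cats1 find_cat hn /=; case: (isMsg e) => /=; lia.
Qed.

Lemma reception_eq (V : finType) (adj : rel V) D1 D2 s1 s2 v :
  (forall u, tx D1 s1 u = tx D2 s2 u) -> reception adj D1 s1 v = reception adj D2 s2 v.
Proof. by move=> H; rewrite /reception (eq_pmap H). Qed.

Lemma reception_none (V : finType) (adj : rel V) D s v :
  (forall u, tx D s u = None) -> reception adj D s v = ESil.
Proof.
move=> H; rewrite /reception.
suff -> : pmap (tx D s) (filter (adj v) (enum V)) = [::] by [].
by elim: (filter _ _) => //= x l ->; rewrite H.
Qed.

Section Sim.
Variables (V : finType) (adj : rel V) (t : V -> nat) (D : drip).
Let S := span t.
Let P := Dpat S D.

Lemma tv_le v : t v <= S.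
Proof. exact: (leq_bigmax (F := t) v). Qed.

Definition preinv g v :=
  if g <= t v then exec adj t P g v = None
  else exists h, exec adj t P g v = Some (h, false) /\ size h = g - t v /\ ~~ started S h.

Lemma preinv_tx g : (forall v, preinv g v) -> forall u, tx P (exec adj t P g) u = None.
Proof.
move=> I u; move: (I u); rewrite /preinv /tx; case: ifP => _; first by move=> ->.
by case=> h [-> [_ nst]]; rewrite /P /Dpat (negbTE nst).
Qed.

Lemma pre g : g <= S -> forall v, preinv g v.
Proof.
elim: g => [|g IH] Hg v; first by rewrite /preinv.
have IHg := IH (ltnW Hg).
have rec := reception_none adj v (preinv_tx IHg).
move: (IHg v); rewrite /preinv.
change (exec adj t P g.+1) with (step adj t P (exec adj t P g) g).
rewrite /step; case: ifP => Hle.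
- move=> ->; rewrite rec; case: eqP => Htg.
  + subst; rewrite ltnn; exists [:: ESil]; split => //; split; first (rewrite /=; lia).
    rewrite /started /startidx /=; lia.
  + have -> : g < t v by lia. done.
- case=> h [-> [Hs nst]]; rewrite /P /Dpat (negbTE nst) rec.
  have -> : (g < t v) = false by lia.
  exists (rcons h ESil); split => //; split; first by rewrite size_rcons; lia.
  rewrite /started startidx_nst //= ?size_rcons; lia.
Qed.

Definition inv r v :=
  match exec adj t D r v with
  | None => r <= t v /\
      (if r + S <= t v then exec adj t P (r + S) v = None
       else exists h, exec adj t P (r + S) v = Some (h, false) /\
                      size h = r + S - t v /\ ~~ started S h)
  | Some (h', b) => exists h, exec adj t P (r + S) v = Some (h, b) /\
                      started S h /\ virt S h = h'
  end.

Lemma inv_tx r : (forall v, inv r v) ->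
  forall u, tx P (exec adj t P (r + S)) u = tx D (exec adj t D r) u.
Proof.
move=> I u; move: (I u); rewrite /inv /tx.
case: (exec adj t D r u) => [[h' b]|].
- by case=> h [-> [st <-]]; case: b => //; rewrite /P /Dpat st.
- case=> _; case: ifP => _; first by move=> ->.
  by case=> h [-> [_ nst]]; rewrite /P /Dpat (negbTE nst).
Qed.

Lemma main r : forall v, inv r v.
Proof.
elim: r => [|r IH] v.
  rewrite /inv /= add0n; split => //; exact: (pre (leqnn S) v).
have Hrec w := reception_eq adj w (inv_tx IH).
rewrite /inv addSn.
change (exec adj t D r.+1) with (step adj t D (exec adj t D r) r).
change (exec adj t P (r + S).+1) with (step adj t P (exec adj t P (r + S)) (r + S)).
rewrite /step Hrec.
move: (IH v); rewrite /inv.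
case: (exec adj t D r v) => [[h' b]|].
- case=> h [-> [st vh]]; case: b.
    by exists h.
  rewrite /P /Dpat st vh.
  case: (D h') => [|m|] /=; eexists; (split; [reflexivity|]);
    (split; [exact: started_rcons | by rewrite virt_rcons // vh]).
- case=> Hr; have Htv := tv_le v; case: ifP => Hle.
  + have r0 : r = 0 by lia.
    subst r. have -> : reception adj D (exec adj t D 0) v = ESil
      by apply: reception_none.
    move=> ->; have -> : t v == 0 + S by apply/eqP; lia.
    case: eqP => Ht0.
    * exists [:: ESil]; split => //; rewrite /started /virt /startidx /=; split; first lia.
      have -> : minn 1 S = 0 by lia. done.
    * split; first lia. have -> : (1 + S <= t v) = false by lia.
      exists [:: ESil]; split => //; split; first (rewrite /=; lia).
      rewrite /started /startidx /=; lia.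
  + case=> h [-> [Hs nst]]; rewrite /P /Dpat (negbTE nst).
    have Hs0 : 0 < size h by lia.
    have HsS : size h <= S by lia.
    case E: (reception adj D (exec adj t D r) v) => [|m|].
    * case: eqP => Htr /=.
      -- exists (rcons h ESil); split => //.
         have hi : startidx S (rcons h ESil) = S by rewrite startidx_nst //=; lia.
         rewrite /started /virt hi size_rcons nth_rcons; split; first lia.
         have -> : S < size h = false by lia.
         have -> : S == size h by apply/eqP; lia.
         by rewrite drop_oversize // size_rcons; lia.
      -- split; first lia. have -> : (r.+1 + S <= t v) = false by lia.
         exists (rcons h ESil); split => //; split; first by rewrite size_rcons; lia.
         rewrite /started startidx_nst //= size_rcons; lia.
    * exists (rcons h (EMsg m)); split => //.
      have hi : startidx S (rcons h (EMsg m)) = size h by rewrite startidx_nst.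
      rewrite /started /virt hi size_rcons nth_rcons ltnn eqxx; split; first lia.
      by rewrite drop_oversize // size_rcons.
    * case: eqP => Htr /=.
      -- exists (rcons h ECol); split => //.
         have hi : startidx S (rcons h ECol) = S by rewrite startidx_nst //=; lia.
         rewrite /started /virt hi size_rcons nth_rcons; split; first lia.
         have -> : S < size h = false by lia.
         have -> : S == size h by apply/eqP; lia.
         by rewrite drop_oversize // size_rcons; lia.
      -- split; first lia. have -> : (r.+1 + S <= t v) = false by lia.
         exists (rcons h ECol); split => //; split; first by rewrite size_rcons; lia.
         rewrite /started startidx_nst //= size_rcons; lia.
Qed.

End Sim.

Theorem lemma9 (V : finType) (adj : rel V) (t : V -> nat) :
  configuration adj t -> feasible adj t ->
  exists (Dpat : drip) (fpat : decision),
    patient adj t Dpat /\ dedicated_LE adj t Dpat fpat.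
Proof.
move=> _ [D [f [R [Hterm Hcard]]]].
exists (Dpat (span t) D), (fpat (span t) f); split.
  move=> r Hr v; exact: (@preinv_tx V adj t D r (@pre V adj t D r Hr) v).
exists (R + span t); split.
  move=> v; case: (Hterm v) => h' E; move: (@main V adj t D R v); rewrite /inv E.
  by case=> h [-> _]; exists h.
rewrite -Hcard; apply: eq_card => v; rewrite !inE.
move: (@main V adj t D R v); rewrite /inv.
case: (exec adj t D R v) => [[h' b]|].
  by case=> h [-> [_ <-]]; case: b.
case=> _; case: ifP => _; first by move=> ->.
by case=> h [-> _].
Qed.
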